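(* Let $d\ge 1$ and consider the linear hyperbolic system $\partial_t \mathbf{u} + \sum_{i=1}^{d} A_i \partial_{x_i}\mathbf{u} = 0$ on $\prod_{i=1}^d[0,1]$ with periodic boundary conditions, where the $A_i$ are real constant matrices such that every real linear combination $\sum_i \alpha_i A_i$ is diagonalizable with real eigenvalues. Let $\mathcal{L}$ be a linear finite difference scheme for this system on the uniform grid with $\Delta x_j = 1/N_j$, with Fourier symbol matrix $Q_{\mathcal{L}}(\mathbf{k})$, let $Q_{\mathcal{L}^*}(\mathbf{k})$ be the Fourier symbol matrix of the backward scheme $\mathcal{L}^*$, and let $Q_B(\mathbf{k}) = Q_{\mathcal{L}}(\mathbf{k})\left(I + \tfrac12\left(I - Q_{\mathcal{L}^*}(\mathbf{k})Q_{\mathcal{L}}(\mathbf{k})\right)\right)$ be the Fourier symbol matrix of the BFECC scheme based on $\mathcal{L}$. Suppose that for all $\mathbf{k}\in\mathcal{F}_{\mathbf{N}}$: (1) $Q_{\mathcal{L}^*}(\mathbf{k}) = \overline{Q_{\mathcal{L}}(\mathbf{k})}$ (entrywise complex conjugate); (2) $Q_{\mathcal{L}^*}(\mathbf{k})Q_{\mathcal{L}}(\mathbf{k}) = Q_{\mathcal{L}}(\mathbf{k})Q_{\mathcal{L}^*}(\mathbf{k})$; (3) $\mathrm{Re}(Q_{\mathcal{L}}(\mathbf{k}))$ and $\mathrm{Im}(Q_{\mathcal{L}}(\mathbf{k}))$ (entrywise real and imaginary parts) are diagonalizable with real eigenvalues. Then $|\rho(Q_B(\mathbf{k}))| \le 1$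 for all $\mathbf{k}\in\mathcal{F}_{\mathbf{N}}$ if and only if $|\rho(Q_{\mathcal{L}}(\mathbf{k}))|\le 2$ for all $\mathbf{k}\in\mathcal{F}_{\mathbf{N}}$, where $\rho$ denotes spectral radius.
   Context: Grid: $\mathbf{N}=(N_1,\dots,N_d)$, grid indices $\mathbf{j}\in\mathcal{D}_{\mathbf{N}}=\mathbb{Z}^d\cap\prod_i[0,N_i-1]$, grid points $\mathbf{x}_{\mathbf{j}}=(j_1\Delta x_1,\dots,j_d\Delta x_d)$, numerical solution $\mathbf{U}^n_{\mathbf{j}}\approx \mathbf{u}(\mathbf{x}_{\mathbf{j}},t_n)$, and $\mathbf{U}^{n+1}=\mathcal{L}\mathbf{U}^n$ with $\mathcal{L}$ linear. Dual index set $\mathcal{F}_{\mathbf{N}}=\mathbb{Z}^d\cap\prod_i[1-N_i,N_i-1]$. Writing $\mathbf{U}^n_{\mathbf{j}}=\sum_{\mathbf{k}\in\mathcal{F}_{\mathbf{N}}}\mathbf{C}^n_{\mathbf{k}}e^{2\pi i\mathbf{k}\cdot\mathbf{x}_{\mathbf{j}}}$, linearity gives $\mathbf{C}^{n+1}_{\mathbf{k}}=Q_{\mathcal{L}}(\mathbf{k})\mathbf{C}^n_{\mathbf{k}}$; $Q_{\mathcal{L}}(\mathbf{k})$ is the Fourier symbol matrix. The backward scheme $\mathcal{L}^*$ is the scheme $\mathcal{L}$ applied to the time-reversed system $\partial_t\mathbf{u}-\sum_i A_i\partial_{x_i}\mathbf{u}=0$. The BFECC scheme based on $\mathcal{L}$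 updates $\mathbf{U}^n$ by: $\tilde{\mathbf{U}}^{n+1}=\mathcal{L}\mathbf{U}^n$; $\tilde{\mathbf{U}}^n=\mathcal{L}^*\tilde{\mathbf{U}}^{n+1}$; $\mathbf{U}^{n+1}=\mathcal{L}(\mathbf{U}^n+\tfrac12(\mathbf{U}^n-\tilde{\mathbf{U}}^n))$; its Fourier symbol matrix is $Q_B$ as given. *)

(* Defs.v *)
From HB Require Import structures.
From mathcomp Require Import all_boot all_order all_algebra.
Set Warnings "-notation-overridden,-ambiguous-paths".
From mathcomp Require Import mxred.
From mathcomp Require Import complex.
From mathcomp Require Import boolp classical_sets reals.
Set Implicit Arguments. Unset Strict Implicit. Unset Printing Implicit Defensive.
Import Order.TTheory GRing.Theory Num.Theory.
Local Open Scope ring_scope.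
Local Open Scope classical_set_scope.

Definition cmx (R : realType) (m : nat) (A : 'M[R]_m) : 'M[R[i]]_m :=
  map_mx (fun x : R => (x +i* 0)%C) A.

Definition conj_mx (R : realType) (m : nat) (Q : 'M[R[i]]_m) : 'M[R[i]]_m :=
  map_mx (fun z : R[i] => z^*) Q.
Definition Re_mx (R : realType) (m : nat) (Q : 'M[R[i]]_m) : 'M[R]_m :=
  map_mx (@complex.Re R) Q.
Definition Im_mx (R : realType) (m : nat) (Q : 'M[R[i]]_m) : 'M[R]_m :=
  map_mx (@complex.Im R) Q.

Definition diag_real_eig (R : realType) (m : nat) (A : 'M[R]_m) : Prop :=
  diagonalizable (cmx A) /\
  (forall l : R[i], eigenvalue (cmx A) l -> complex.Im l = 0).

(* Spectral radius: the largest modulus of an eigenvalue (0 if there is none). *)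
Definition spectral_radius (R : realType) (m : nat) (Q : 'M[R[i]]_m) : R :=
  sup [set Normc.normc l | l in [set l : R[i] | eigenvalue Q l]].

Definition in_FN (d : nat) (N : 'I_d -> nat) (k : 'I_d -> int) : Prop :=
  forall i : 'I_d, (1 - (N i)%:Z <= k i) /\ (k i <= (N i)%:Z - 1).

Definition bfecc_symbol (R : realType) (m : nat) (QL QLs : 'M[R[i]]_m) : 'M[R[i]]_m :=
  QL *m (1%:M + 2^-1 *: (1%:M - QLs *m QL)).

(* Main.v *)
Require Import Defs.
From HB Require Import structures.
From mathcomp Require Import all_boot all_order all_algebra.
From mathcomp Require Import mxred complex.
From mathcomp Require Import boolp classical_sets reals.
From mathcomp.algebra_tactics Require Import ring lra.
Import Order.TTheory GRing.Theory Num.Theory.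
Local Open Scope ring_scope.

Section Helpers.
Local Open Scope classical_set_scope.
Lemma real_ineq (R : realType) (r : R) : 0 <= r ->
  (r * `|1 + 2^-1 * (1 - r^+2)| <= 1 <-> r <= 2).
Proof.
move=> r0; have [h|h] := lerP 0 (1 + 2^-1 * (1 - r^+2)).
  rewrite ger0_norm //; split => H.
    by nra.
  have : 0 <= (r - 1)^+2 * (r + 2) by rewrite mulr_ge0 ?sqr_ge0 //; lra.
  nra.
rewrite ltr0_norm //; split => H.
  have h1 : 0 < (r + 1)^+2 by rewrite exprn_gt0 //; lra.
  have : (r - 2) * (r + 1)^+2 <= 0 by nra.
  rewrite pmulr_lle0 //; lra.
have : (r - 2) * (r + 1)^+2 <= 0 by apply: mulr_le0_ge0; [lra | exact: sqr_ge0].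
nra.
Qed.

Lemma cst_C (R : realType) (s : R) :
  (1 + 2^-1 * (1 - (s +i* 0)%C)) = ((1 + 2^-1 * (1 - s)) +i* 0)%C :> R[i].
Proof.
rewrite !complexr0 rmorphD rmorphM rmorphB rmorph1 fmorphV.
by rewrite (rmorph_nat (real_complex R)).
Qed.

Lemma key_scalar (R : realType) (x y : R) :
  Normc.normc ((x +i* y)%C * (1 + 2^-1 * (1 - (x -i* y)%C * (x +i* y)%C))) <= 1
  <-> Normc.normc (x +i* y)%C <= 2.
Proof.
have -> : (x -i* y)%C * (x +i* y)%C = ((x ^+ 2 + y ^+ 2) +i* 0)%C.
  by apply/eqP; rewrite eq_complex /=; apply/andP; split; apply/eqP; ring.
rewrite cst_C.
set s := x ^+ 2 + y ^+ 2.
have s0 : 0 <= s by rewrite /s addr_ge0 ?sqr_ge0.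
rewrite Normc.normcM.
have -> : Normc.normc (x +i* y)%C = Num.sqrt s by [].
have -> : Normc.normc ((1 + 2^-1 * (1 - s)) +i* 0)%C = `|1 + 2^-1 * (1 - s)|.
  by rewrite /= expr0n /= addr0 sqrtr_sqr.
have -> : s = (Num.sqrt s) ^+ 2 by rewrite sqr_sqrtr.
rewrite sqrtr_sqr ger0_norm ?sqrtr_ge0 //.
apply: real_ineq; exact: sqrtr_ge0.
Qed.
Lemma conj_eig (F : fieldType) n (P D : 'M[F]_n) a : P \in unitmx ->
  eigenvalue (invmx P *m D *m P) a = eigenvalue D a.
Proof.
move=> Pu; apply/eigenvalueP/eigenvalueP => -[v Hv v0].
  exists (v *m invmx P).
    move: (congr1 (mulmx^~ (invmx P)) Hv) => /=.
    by rewrite !mulmxA mulmxK // => ->; rewrite scalemxAl.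
  apply: contra v0 => /eqP h; apply/eqP.
  by rewrite -(mulmxKV Pu v) h mul0mx.
exists (v *m P).
  by rewrite !mulmxA mulmxK // Hv scalemxAl.
apply: contra v0 => /eqP h; apply/eqP.
by rewrite -(mulmxK Pu v) h mul0mx.
Qed.

Lemma diag_eig (F : fieldType) n (e : 'rV[F]_n) a :
  eigenvalue (diag_mx e) a <-> exists j, a = e 0 j.
Proof.
split.
  move=> /eigenvalueP [v Hv v0].
  have [j vj] : exists j, v 0 j != 0.
    apply/existsP; apply: contraR v0 => /existsPn h; apply/eqP/matrixP => i j.
    by rewrite !mxE (ord1 i); move: (h j); rewrite negbK => /eqP.
  exists j; move/matrixP: Hv => /(_ 0 j); rewrite mul_mx_diag !mxE.
  by move=> h; apply/esym/(mulIf vj); rewrite -h mulrC.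
move=> [j ->]; apply/eigenvalueP; exists (delta_mx 0 j).
  apply/matrixP => i k; rewrite mul_mx_diag !mxE.
  by rewrite (ord1 i) eqxx /=; case: eqP => [->|_]; rewrite ?mulr0 ?mul0r ?mulr1 ?mul1r.
apply/eqP => /matrixP /(_ 0 j); rewrite !mxE !eqxx /= => /eqP.
by rewrite oner_eq0.
Qed.
Lemma sup_lemma (R : realType) n (E : set R[i]) (e : 'I_n -> R[i]) (b : R) :
  0 <= b -> (forall l, E l <-> exists j, l = e j) ->
  (`|sup [set Normc.normc l | l in E]| <= b <-> forall j, Normc.normc (e j) <= b).
Proof.
move=> b0 HE; set S := [set Normc.normc l | l in E].
have nc0 : forall z : R[i], 0 <= Normc.normc z by case=> ? ?; exact: sqrtr_ge0.
have inS : forall j, S (Normc.normc (e j)).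
  by move=> j; exists (e j) => //; apply/HE; exists j.
have ubS : ubound S (\sum_j Normc.normc (e j)).
  move=> y [l /HE [j ->] <-].
  rewrite (bigD1 j) //= lerDl sumr_ge0 // => k _; exact: nc0.
have [S0|/set0P SN] := eqVneq S set0.
  rewrite S0 sup0 normr0; split => // _ j.
  by have := inS j; rewrite S0.
have hs : has_sup S by split => //; exists (\sum_j Normc.normc (e j)).
have sup_ub := sup_upper_bound hs.
have sup0 : 0 <= sup S.
  by case: SN => y Sy; apply: le_trans (sup_ub _ Sy); case: Sy => l _ <-.
rewrite ger0_norm //; split.
  by move=> H j; apply: le_trans H; apply: sup_ub.
move=> H; apply: ge_sup => // y [l /HE [j ->] <-]; exact: H.
Qed.

Lemma cj_mul {F : fieldType} {n} {P : 'M[F]_n} (Pu : P \in unitmx) (A B : 'M[F]_n) :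
  (invmx P *m A *m P) *m (invmx P *m B *m P) = invmx P *m (A *m B) *m P.
Proof. by rewrite !mulmxA (mulmxK Pu). Qed.

Lemma main_k (R : realType) m (Q : 'M[R[i]]_m) :
  diag_real_eig (Re_mx Q) -> diag_real_eig (Im_mx Q) ->
  conj_mx Q *m Q = Q *m conj_mx Q ->
  (`|spectral_radius (bfecc_symbol Q (conj_mx Q))| <= 1 <-> `|spectral_radius Q| <= 2).
Proof.
move=> [dX eX] [dY eY] hc.
set X := cmx (Re_mx Q) in dX eX *; set Y := cmx (Im_mx Q) in dY eY *.
set Qs := conj_mx Q in hc *.
have HQ : Q = X + 'i%C *: Y.
  apply/matrixP => i j; rewrite !mxE; case: (Q i j) => a b /=.
  by apply/eqP; rewrite eq_complex /=; apply/andP; split; apply/eqP; ring.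
have HQs : Qs = X - 'i%C *: Y.
  apply/matrixP => i j; rewrite !mxE; case: (Q i j) => a b /=.
  by apply/eqP; rewrite eq_complex /=; apply/andP; split; apply/eqP; ring.
have sAr : forall (a : R[i]) (A B : 'M[R[i]]_m), A *m (a *: B) = a *: (A *m B).
  by move=> a A B; rewrite scalemxAr.
have sAl : forall (a : R[i]) (A B : 'M[R[i]]_m), (a *: A) *m B = a *: (A *m B).
  by move=> a A B; rewrite scalemxAl.
have XY : X *m Y = Y *m X.
  have e1 : Q = Qs + ('i%C + 'i%C) *: Y by rewrite {1}HQ HQs scalerDl addrA subrK.
  have c0 : ('i%C + 'i%C) != 0 :> R[i].
    by apply/negP; rewrite eq_complex /= => /andP [_ /eqP]; lra.
  rewrite e1 mulmxDr mulmxDl in hc.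
  rewrite -(scalemxAr _ Qs Y) -(scalemxAl _ Y Qs) in hc.
  move/addrI/(scalerI c0): hc.
  rewrite HQs mulmxBl mulmxBr sAr sAl.
  by move/addIr.
have [P Pu HP] : codiagonalizable [:: X; Y].
  apply/codiagonalizableP; split.
    move=> f g; rewrite !inE => /orP[]/eqP-> /orP[]/eqP->; rewrite /comm_mx //.
  by move=> f; rewrite !inE => /orP[]/eqP->.
move: HP => /= /and3P [hX hY _].
move: hX => /(similar_diagLR Pu) [dx hx].
move: hY => /(similar_diagLR Pu) [dy hy].
rewrite conjumx ?unitmx_inv // invmxK in hx.
rewrite conjumx ?unitmx_inv // invmxK in hy.
have dZ : forall (a : R[i]) (d : 'rV[R[i]]_m), diag_mx (a *: d) = a *: diag_mx d.
  by move=> a d; apply/matrixP => i j; rewrite !mxE mulrnAr.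
have dD : forall (d e : 'rV[R[i]]_m), diag_mx (d + e) = diag_mx d + diag_mx e.
  by move=> d e; apply/matrixP => i j; rewrite !mxE mulrnDl.
have dB : forall (d e : 'rV[R[i]]_m), diag_mx (d - e) = diag_mx d - diag_mx e.
  by move=> d e; apply/matrixP => i j; rewrite !mxE mulrnBl.
set c := dx + 'i%C *: dy; set c' := dx - 'i%C *: dy.
have hQd : Q = invmx P *m diag_mx c *m P.
  rewrite {1}HQ hx hy /c dD dZ mulmxDr mulmxDl sAr sAl.
  reflexivity.
have hQsd : Qs = invmx P *m diag_mx c' *m P.
  rewrite HQs hx hy /c' dB dZ mulmxBr mulmxBl sAr sAl.
  reflexivity.
have e2 : Qs *m Q = invmx P *m (diag_mx c' *m diag_mx c) *m P.
  rewrite hQsd.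
  rewrite {1}hQd.
  rewrite (cj_mul Pu).
  reflexivity.
have e3 : 1%:M + 2^-1 *: (1%:M - Qs *m Q) =
    invmx P *m (1%:M + 2^-1 *: (1%:M - diag_mx c' *m diag_mx c)) *m P.
  rewrite e2 mulmxDr mulmxDl sAr sAl mulmxBr mulmxBl mulmx1 (mulVmx Pu).
  reflexivity.
set g := \row_j (1 + 2^-1 * (1 - c' 0 j * c 0 j)).
set e := \row_j (c 0 j * g 0 j).
have hB : bfecc_symbol Q Qs = invmx P *m diag_mx e *m P.
  rewrite /bfecc_symbol e3 {1}hQd (cj_mul Pu).
  have -> : diag_mx c *m (1%:M + 2^-1 *: (1%:M - diag_mx c' *m diag_mx c)) = diag_mx e.
    rewrite mulmx_diag mul_diag_mx; apply/matrixP => i j; rewrite !mxE.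
    case: (eqVneq i j) => [->|nij]; rewrite ?eqxx ?mulr1n ?mulr0n /=.
      reflexivity.
    by rewrite subr0 mulr0 addr0 mulr0.
  reflexivity.
have rx : forall j, complex.Im (dx 0 j) = 0.
  move=> j; apply: eX; rewrite hx (@conj_eig _ _ P _ _ Pu); apply/diag_eig; by exists j.
have ry : forall j, complex.Im (dy 0 j) = 0.
  move=> j; apply: eY; rewrite hy (@conj_eig _ _ P _ _ Pu); apply/diag_eig; by exists j.
have hcx : forall j, dx 0 j + 'i%C * dy 0 j = (complex.Re (dx 0 j) +i* complex.Re (dy 0 j))%C.
  move=> j; move: (rx j) (ry j).
  case: (dx 0 j) => a b /= ->; case: (dy 0 j) => a' b' /= ->.
  by apply/eqP; rewrite eq_complex /=; apply/andP; split; apply/eqP; ring.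
have hcx' : forall j, dx 0 j - 'i%C * dy 0 j = (complex.Re (dx 0 j) -i* complex.Re (dy 0 j))%C.
  move=> j; move: (rx j) (ry j).
  case: (dx 0 j) => a b /= ->; case: (dy 0 j) => a' b' /= ->.
  by apply/eqP; rewrite eq_complex /=; apply/andP; split; apply/eqP; ring.
have hEQ : forall l, [set l : R[i] | eigenvalue Q l] l <-> exists j, l = c 0 j.
  move=> l /=; rewrite hQd (@conj_eig _ _ P _ _ Pu); exact: diag_eig.
have hEB : forall l, [set l : R[i] | eigenvalue (bfecc_symbol Q Qs) l] l <->
    exists j, l = e 0 j.
  move=> l /=; rewrite hB (@conj_eig _ _ P _ _ Pu); exact: diag_eig.
rewrite /spectral_radius (@sup_lemma _ _ _ (fun j => e 0 j) 1 ler01 hEB).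
rewrite (@sup_lemma _ _ _ (fun j => c 0 j) 2 (ler0n _ 2) hEQ).
split => H j; have := H j; rewrite /e /g !mxE hcx hcx'; by move/key_scalar.
Qed.

End Helpers.

Theorem theorem2p1
  (R : realType) (d m : nat) (hd : (1 <= d)%N)
  (A : 'I_d -> 'M[R]_m)
  (hyperbolic : forall alpha : 'I_d -> R,
      diag_real_eig (\sum_(i < d) alpha i *: A i))
  (N : 'I_d -> nat) (hN : forall i, (1 <= N i)%N)
  (QL QLs : ('I_d -> int) -> 'M[R[i]]_m)
  (h1 : forall k, in_FN N k -> QLs k = conj_mx (QL k))
  (h2 : forall k, in_FN N k -> QLs k *m QL k = QL k *m QLs k)
  (h3 : forall k, in_FN N k ->
      diag_real_eig (Re_mx (QL k)) /\ diag_real_eig (Im_mx (QL k))) :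
  (forall k, in_FN N k -> `|spectral_radius (bfecc_symbol (QL k) (QLs k))| <= 1)
  <-> (forall k, in_FN N k -> `|spectral_radius (QL k)| <= 2).
Proof.
split => H k hk.
  have hc := h2 k hk; rewrite (h1 k hk) in hc.
  have := H k hk; rewrite (h1 k hk) => hB.
  exact: (@main_k _ _ _ (h3 k hk).1 (h3 k hk).2 hc).1.
have hc := h2 k hk; rewrite (h1 k hk) in hc.
rewrite (h1 k hk).
exact: (@main_k _ _ _ (h3 k hk).1 (h3 k hk).2 hc).2 (H k hk).
Qed.
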